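(* Let $\Omega\subseteq\mathbb{R}^d$ be a nonempty open convex set and $F:\Omega\to\mathbb{R}$ a function of Legendre type with Bregman divergence $D_F$. Let $A=\prod_{i=1}^d[a_i,b_i]\subset\mathbb{R}^d$ be an axis-aligned box of positive finite volume (i.e. $a_i<b_i$ real), with boundary $\partial A$. Let $q\in\Omega\setminus A$, let $r\ge 0$ be finite, and let $B$ be the Bregman ball (either the primal ball $\{y\in\Omega: D_F(q\|y)\le r\}$ or the dual ball $\{y\in\Omega: D_F(y\|q)\le r\}$) centered at $q$ of radius $r$. If $B\cap\partial A=\emptyset$, then $A\cap\Omega\subseteq\Omega\setminus B$.
   Context: A function $F:\Omega\to\mathbb{R}$ on a nonempty open convex set $\Omega\subseteq\mathbb{R}^d$ is of Legendre type if (I) it is differentiable, (II) it is strictly convex, and (III) if $\partial\Omega$ is nonempty, then $\|\nabla F(x)\|\to\infty$ as $x\to\partial\Omega$. The Bregman divergence generated by $F$ is $D_F(x\|y)=F(x)-F(y)-\langle\nabla F(y),x-y\rangle$ for $x,y\in\Omega$. *)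

(* Defs.v *)
From HB Require Import structures.
From mathcomp Require Import all_boot all_order all_algebra.
From mathcomp Require Import all_classical all_reals all_analysis.
Set Implicit Arguments. Unset Strict Implicit. Unset Printing Implicit Defensive.
Import Order.TTheory GRing.Theory Num.Theory.
Import numFieldNormedType.Exports.
Local Open Scope classical_set_scope.
Local Open Scope ring_scope.

Section Bregman.
Context {R : realType} {d : nat}.
Implicit Types (Omega A : set 'rV[R]_d) (F : 'rV[R]_d -> R) (x y : 'rV[R]_d).

Definition ebasis (i : 'I_d) : 'rV[R]_d := \row_j (i == j)%:R.

Definition grad F x : 'rV[R]_d := \row_i ('d F x (ebasis i)).

Definition dotp x y : R := \sum_i x ord0 i * y ord0 i.
Definition enorm x : R := Num.sqrt (dotp x x).

(* convexity of Omega: we use the library's convex.convex_set *)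

Definition strictly_convex_on Omega F : Prop :=
  forall x y t, Omega x -> Omega y -> x != y -> 0 < t < 1 ->
    F (t *: x + (1 - t) *: y) < t * F x + (1 - t) * F y.

(* Legendre type on a nonempty open convex Omega (F values outside Omega
   are irrelevant).  (III): for every boundary point z of Omega,
   ||grad F x|| -> +oo as x -> z with x in Omega. *)
Definition legendre_type Omega F : Prop :=
  [/\ (forall x, Omega x -> differentiable F x),
      strictly_convex_on Omega F &
      (forall z, closure Omega z -> ~ Omega z ->
         forall M : R, exists2 e : R, 0 < e &
           forall x, Omega x -> enorm (x - z) < e -> M < enorm (grad F x))].

Definition bregman F x y : R := F x - F y - dotp (grad F y) (x - y).

Definition primal_ball Omega F q r : set 'rV[R]_d :=
  [set y | Omega y /\ bregman F q y <= r].
Definition dual_ball Omega F q r : set 'rV[R]_d :=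
  [set y | Omega y /\ bregman F y q <= r].

Definition box (a b : 'I_d -> R) : set 'rV[R]_d :=
  [set x | forall i, a i <= x ord0 i <= b i].

Definition boundary A : set 'rV[R]_d := closure A `\` interior A.

End Bregman.

(* Main.v *)
Require Import Defs.
From HB Require Import structures.
From mathcomp Require Import all_boot all_order all_algebra.
From mathcomp Require Import all_classical all_reals all_analysis.
From mathcomp Require Import lra ring.
Import Order.TTheory GRing.Theory Num.Theory.
Import numFieldNormedType.Exports.
Local Open Scope classical_set_scope.
Local Open Scope ring_scope.

Section S.
Context {R : realType} {d : nat}.
Implicit Types (Omega A : set 'rV[R]_d) (F : 'rV[R]_d -> R) (x y : 'rV[R]_d).

Lemma conv_mem Omega x y t : convex_set Omega -> Omega x -> Omega y ->
  0 <= t -> t <= 1 -> Omega (t *: x + (1 - t) *: y).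
Proof.
move=> cO xO yO t0 t1.
have := cO x y (Itv01 t0 t1) (mem_set xO) (mem_set yO).
by rewrite inE.
Qed.

Lemma convF Omega F x y t : strictly_convex_on Omega F -> Omega x -> Omega y ->
  0 <= t -> t <= 1 -> F (t *: x + (1 - t) *: y) <= t * F x + (1 - t) * F y.
Proof.
move=> sc xO yO t0 t1.
have [->|xy] := eqVneq x y.
  by rewrite -scalerDl -mulrDl addrCA subrr addr0 scale1r mul1r.
have [->|tn0] := eqVneq t 0.
  by rewrite scale0r mul0r !add0r subr0 scale1r mul1r.
have [->|tn1] := eqVneq t 1.
  by rewrite subrr scale0r mul0r !addr0 scale1r mul1r.
apply/ltW/sc => //.
by rewrite lt_neqAle eq_sym tn0 t0 lt_neqAle tn1 t1.
Qed.

Lemma grad_dot F x v : dotp (grad F x) v = 'd F x v.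
Proof.
have vE : v = \sum_i v ord0 i *: ebasis i.
  apply/rowP => j; rewrite summxE (bigD1 j) //= big1 ?addr0.
    by rewrite !mxE eqxx mulr1.
  by move=> i ij; rewrite !mxE (negbTE ij) mulr0.
rewrite [in RHS]vE linear_sum /dotp; apply: eq_bigr => i _.
rewrite linearZ /= !mxE mulrC.
by [].
Qed.
Lemma dZ F x c v : 'd F x (c *: v) = c * 'd F x v.
Proof. by rewrite linearZ. Qed.
End S.

Section S2.
Context {R : realType} {d : nat}.
Implicit Types (Omega A : set 'rV[R]_d) (F : 'rV[R]_d -> R) (x y : 'rV[R]_d).

Lemma grad_ineq Omega F x y : strictly_convex_on Omega F -> Omega x -> Omega y ->
  differentiable F y -> 'd F y (x - y) <= F x - F y.
Proof.
move=> sc xO yO dF.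
set v := x - y.
have cg := @diff_derivable _ _ _ F y v dF.
rewrite /derivable in cg.
rewrite -deriveE //.
have cg' : (fun h : R => h^-1 *: ((F \o shift y) (h *: v) - F y)) @ 0^'+ --> 'D_v F y.
  move=> A /cg /nbhs_ballP [e /= e0 Ae]; exists e => //= z ze.
  by rewrite lt_def => /andP[z0 _]; apply: Ae.
apply: (cvgr_to_le cg').
near=> h.
have h0 : 0 < h by near: h; exact: nbhs_right_gt.
have h1 : h < 1 by near: h; exact: nbhs_right_lt.
rewrite /= /shift.
have -> : h *: v + y = h *: x + (1 - h) *: y.
  by rewrite /v scalerBr scalerBl scale1r -addrA [_ + y]addrC.
have := @convF R d Omega F x y h sc xO yO (ltW h0) (ltW h1).
move=> hc; rewrite -[leLHS]/(h^-1 * _) ler_pdivrMl //.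
nra.
Unshelve. all: end_near.
Qed.
End S2.

Section S3.
Context {R : realType} {d : nat}.

Lemma cross (a b : 'I_d -> R) (q x : 'rV[R]_d) : ~ box a b q -> box a b x ->
  exists2 t, 0 <= t <= 1 & boundary (box a b) (q + t *: (x - q)).
Proof.
move=> nq bx.
set v := x - q.
pose T := [set t : R | (0 <= t <= 1) /\ box a b (q + t *: v)].
have T1 : T 1 by split; [rewrite ler01 lexx | rewrite scale1r /v addrC subrK].
have lbT : lbound T 0 by move=> t [/andP[]].
have hT : has_inf T by split; [exists 1 | exists 0].
set s := inf T.
have s1 : s <= 1 by exact: (ge_inf hT.2 T1).
have s0 : 0 <= s by apply: lb_le_inf; [exists 1 | ].
have coord t i : (q + t *: v) ord0 i = q ord0 i + t * v ord0 i by rewrite !mxE.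
have bs : box a b (q + s *: v).
  move=> i; rewrite coord.
  have w0 : 0 < `|v ord0 i| + 1 by have := normr_ge0 (v ord0 i); lra.
  have nv := ler_norm (v ord0 i).
  have nv' : - v ord0 i <= `|v ord0 i| by rewrite -normrN ler_norm.
  apply/andP; split; rewrite leNgt; apply/negP => H.
  - have e0 : 0 < (a i - (q ord0 i + s * v ord0 i)) / (`|v ord0 i| + 1).
      by rewrite divr_gt0 // subr_gt0.
    have [t Tt tlt] := inf_adherent e0 hT.
    have st : s <= t := ge_inf hT.2 Tt.
    have := Tt.2 i; rewrite coord => /andP[ha _].
    have h1 : (t - s) * v ord0 i <= (t - s) * `|v ord0 i| by rewrite ler_wpM2l // subr_ge0.
    have h2 : (t - s) * (`|v ord0 i| + 1) < (a i - (q ord0 i + s * v ord0 i)).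
      by rewrite -ltr_pdivlMr //; lra.
    nra.
  - have e0 : 0 < ((q ord0 i + s * v ord0 i) - b i) / (`|v ord0 i| + 1).
      by rewrite divr_gt0 // subr_gt0.
    have [t Tt tlt] := inf_adherent e0 hT.
    have st : s <= t := ge_inf hT.2 Tt.
    have := Tt.2 i; rewrite coord => /andP[_ hb].
    have h1 : (t - s) * (- v ord0 i) <= (t - s) * `|v ord0 i| by rewrite ler_wpM2l // subr_ge0.
    have h2 : (t - s) * (`|v ord0 i| + 1) < ((q ord0 i + s * v ord0 i) - b i).
      by rewrite -ltr_pdivlMr //; lra.
    nra.
have sn0 : s != 0.
  by apply/eqP => s0'; apply: nq; move: bs; rewrite s0' scale0r addr0.
have sp : 0 < s by rewrite lt_neqAle eq_sym sn0 s0.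
exists s; first by rewrite s0 s1.
split; first exact: subset_closure.
move=> /nbhs_ballP [e /= e0 Be].
have w0 : 0 < `|v| + 1 by have := normr_ge0 v; lra.
have ew0 : 0 < e / (`|v| + 1) by rewrite divr_gt0.
set m := Num.min s (e / (`|v| + 1)) / 2.
have m0 : 0 < m by rewrite /m divr_gt0 // lt_min sp ew0.
have ms : m < s.
  have : Num.min s (e / (`|v| + 1)) <= s by rewrite ge_min lexx.
  rewrite /m; lra.
have me : m < e / (`|v| + 1).
  have : Num.min s (e / (`|v| + 1)) <= e / (`|v| + 1) by rewrite ge_min lexx orbT.
  rewrite /m; lra.
have nTu : ~ T (s - m).
  move=> Tu; have := ge_inf hT.2 Tu; rewrite -/s; lra.
apply: nTu; split; first by apply/andP; split; lra.
apply: Be; rewrite -ball_normE /=.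
have -> : q + s *: v - (q + (s - m) *: v) = m *: v.
  by rewrite opprD addrACA subrr add0r -scalerBl opprB addrC subrK.
rewrite normrZ gtr0_norm //.
have : m * (`|v| + 1) < e by rewrite -ltr_pdivlMr.
have := normr_ge0 v; nra.
Qed.
End S3.

Section Arith.
Context {R : realType}.
Lemma primal_arith (t r Fq Fx Fy Dx Dy : R) : 0 <= t -> t <= 1 ->
  (t - 1) * Dx <= Fy - Fx -> (1 - t) * Dy <= Fx - Fy -> (t = 1 -> Dy <= Dx) ->
  Fq - Fx - -1 * Dx <= r -> Fq - Fy - - t * Dy <= r.
Proof.
move=> t0 t1 G1 G2 H1 xB.
have le : Dy <= Dx.
  have [t1'|tn1] := eqVneq t 1; first exact: H1.
  have tl : t < 1 by rewrite lt_neqAle tn1 t1.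
  have : (1 - t) * (Dy - Dx) <= 0 by lra.
  by rewrite pmulr_rle0 ?subr_gt0 // subr_le0.
nra.
Qed.
Lemma dual_arith (t r Fq Fx Fy Dq : R) : 0 <= t -> t <= 1 -> 0 <= r ->
  Fy <= t * Fx + (1 - t) * Fq -> Fx - Fq - Dq <= r -> Fy - Fq - t * Dq <= r.
Proof. move=> *; nra. Qed.
End Arith.

Theorem lemma3 (R : realType) (d : nat) (Omega : set 'rV[R]_d)
  (F : 'rV[R]_d -> R) (a b : 'I_d -> R) (q : 'rV[R]_d) (r : R)
  (B : set 'rV[R]_d) :
  Omega !=set0 -> open Omega -> convex_set Omega ->
  legendre_type Omega F ->
  (forall i, a i < b i) ->
  Omega q -> ~ box a b q ->
  0 <= r ->
  (B = primal_ball Omega F q r \/ B = dual_ball Omega F q r) ->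
  B `&` boundary (box a b) = set0 ->
  box a b `&` Omega `<=` Omega `\` B.
Proof.
move=> _ _ cO [dF sc _] ab qO nq r0 HB HBd x [xbox xO]; split => // xB.
have [t /andP[t0 t1] bd] := @cross R d a b q x nq xbox.
set v := x - q in bd.
set y := q + t *: v in bd.
have yE : y = t *: x + (1 - t) *: q.
apply/rowP => i; rewrite !mxE.
ring.
have yO : Omega y.
  rewrite yE; exact: (@conv_mem R d Omega x q t cO xO qO t0 t1).
suff yB : B y.
  have : (B `&` boundary (box a b)) y by split.
  by rewrite HBd.
case: HB => HB; rewrite HB in xB *.
  split; first exact: yO.
  case: xB => _ xB.
  rewrite /bregman in xB *.
  rewrite grad_dot in xB.
  rewrite grad_dot.
  have e1 : y - x = (t - 1) *: v by apply/rowP => i; rewrite !mxE; ring.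
  have e2 : x - y = (1 - t) *: v by apply/rowP => i; rewrite !mxE; ring.
  have e3 : q - y = (- t) *: v by apply/rowP => i; rewrite !mxE; ring.
  have e4 : q - x = (- 1) *: v by apply/rowP => i; rewrite !mxE; ring.
  have G1 := @grad_ineq R d Omega F y x sc yO xO (dF x xO).
  have G2 := @grad_ineq R d Omega F x y sc xO yO (dF y yO).
  rewrite e1 in G1; rewrite e2 in G2; rewrite e3; rewrite e4 in xB.
  rewrite (dZ F x (t - 1) v) in G1.
  rewrite (dZ F y (1 - t) v) in G2.
  rewrite (dZ F x (-1) v) in xB.
  rewrite (dZ F y (- t) v).
  clear e1 e2 e3 e4 HB HBd bd yE cO.
  apply: (@primal_arith R t r (F q) (F x) (F y) ('d F x v) ('d F y v) t0 t1 G1 G2 _ xB).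
  move=> t1'.
  have yx : y = x by rewrite /y t1' scale1r /v addrC subrK.
  by rewrite yx.
- split; first exact: yO.
  case: xB => _ xB.
  rewrite /bregman in xB *.
  rewrite grad_dot in xB.
  rewrite grad_dot.
  have e1 : y - q = t *: v by apply/rowP => i; rewrite !mxE; ring.
  have := @convF R d Omega F x q t sc xO qO t0 t1.
  rewrite -yE e1 (dZ F q t v) => cv.
  exact: (@dual_arith R t r (F q) (F x) (F y) ('d F q v) t0 t1 r0 cv xB).
Qed.
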